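(* Let $X$ be a non-empty set and let $E$ be any maximal right pre-reduced subset of $E(T_X^0)$, regarded as a subset of $TRel_X^0$. Then $TRel_X^0$ is an inductive left $E$-monoid, integral with $0\in E$, and $(Rel_X,\circledast,D)\cong Rest_0(E,TRel_X^0)$ as unary semigroups.
   Context: Relations are composed left to right: for binary relations $\rho,\tau$ on $X$, $\rho\tau=\{(x,y)\mid \exists z: (x,z)\in\rho,(z,y)\in\tau\}$. $Rel_X$ is the set of binary relations on $X$; $\mathrm{dom}(\rho)=\{x\mid \exists y:(x,y)\in\rho\}$. Demonic composition is $\rho\circledast\tau=\{(x,y)\in\rho\tau\mid \text{for all } z\in X,\ (x,z)\in\rho\Rightarrow z\in\mathrm{dom}(\tau)\}$, and $D(\rho)$ is the identity relation on $\mathrm{dom}(\rho)$; $(Rel_X,\circledast,D)$ is a left restriction monoid. $TRel_X$ is the set of left total relations ($\mathrm{dom}(\rho)=X$), a monoid under (ordinary = demonic) composition containing $T_X$ (total functions $X\to X$) as a submonoid; $T_X^0$ and $TRel_X^0$ denote these with a new zero element $0$ adjoined, so $T_X^0\subseteq TRel_X^0$. For a semigroup $S$, $E(S)$ is its set of idempotents; for $e,f\in E(S)$, $e\le_r f$ iff $e=ef$, and $e\sim_r f$ iff $e\le_r f$ and $f\le_r e$. $E\subseteq E(S)$ is right pre-reduced if $e=ef$ and $f=fe$ imply $e=f$ for $e,f\in E$, and maximal right pre-reduced if it contains exactly one element of each $\sim_r$-class of $E(S)$. A monoid with zero is integral if $st=0$ implies $s=0$ or $t=0$. Let $S$ be a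 monoid and $1\in E\subseteq E(S)$. $S$ is an inductive left $E$-monoid if $E$ is right pre-reduced, $(E,\le_r)$ is a meet-semilattice with meet $\wedge$, and (I1') for all $t\in S$, $e\in E$ there is $t\cdot e\in E$ such that for all $s\in S$: $ste=st$ iff $s(t\cdot e)=s$; (I2') for $s\in S$, $e,f\in E$: $se=sf=s$ implies $s(e\wedge f)=s$. If $S$ is also integral with zero and $0\in E$, $Rest_0(E,S)$ is the set $\{(e,s)\in E\times S\mid es=s,\ s=0\Rightarrow e=0\}$ with multiplication $(e,s)(f,t)=(e\wedge(s\cdot f),(e\wedge(s\cdot f))st)$ and $D((e,s))=(e,e)$. *)

(* Defs.v *)
From Stdlib Require Import Classical FunctionalExtensionality PropExtensionality.

Set Implicit Arguments.

Definition Rel (X : Type) := X -> X -> Prop.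

Definition rcomp {X : Type} (r t : Rel X) : Rel X :=
  fun x y => exists z, r x z /\ t z y.

Definition rdom {X : Type} (r : Rel X) (x : X) : Prop := exists y, r x y.

Definition demonic {X : Type} (r t : Rel X) : Rel X :=
  fun x y => rcomp r t x y /\ (forall z, r x z -> rdom t z).

Definition Drel {X : Type} (r : Rel X) : Rel X :=
  fun x y => x = y /\ rdom r x.

Definition left_total {X : Type} (r : Rel X) : Prop := forall x, exists y, r x y.

Definition TRel (X : Type) := { r : Rel X | left_total r }.

Lemma left_total_comp {X : Type} (r t : Rel X) :
  left_total r -> left_total t -> left_total (rcomp r t).
Proof.
  intros Hr Ht x. destruct (Hr x) as [z Hz]. destruct (Ht z) as [y Hy].
  exists y, z. split; assumption.
Qed.

Lemma left_total_id {X : Type} : left_total (fun x y : X => x = y).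
Proof. intros x; exists x; reflexivity. Qed.

Definition TRel_mul {X : Type} (r t : TRel X) : TRel X :=
  exist _ (rcomp (proj1_sig r) (proj1_sig t))
        (left_total_comp (proj2_sig r) (proj2_sig t)).

(* TRel_X^0 : None is the adjoined zero *)
Definition TRel0 (X : Type) := option (TRel X).

Definition TRel0_mul {X : Type} (a b : TRel0 X) : TRel0 X :=
  match a, b with
  | Some r, Some t => Some (TRel_mul r t)
  | _, _ => None
  end.

Definition TRel0_one {X : Type} : TRel0 X :=
  Some (exist _ (fun x y : X => x = y) left_total_id).

Definition TRel0_zero {X : Type} : TRel0 X := None.

Definition graph {X : Type} (f : X -> X) : Rel X := fun x y => f x = y.

Definition in_T0 {X : Type} (a : TRel0 X) : Prop :=
  match a with
  | None => True
  | Some r => exists f : X -> X, proj1_sig r = graph f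
  end.

Section Generic.
Variable S : Type.
Variable mul : S -> S -> S.

Definition idempotent (e : S) : Prop := mul e e = e.

Definition idempotents_in (P : S -> Prop) (e : S) : Prop := P e /\ idempotent e.

Definition le_r (e f : S) : Prop := e = mul e f.

Definition sim_r (e f : S) : Prop := le_r e f /\ le_r f e.

Definition right_pre_reduced (E : S -> Prop) : Prop :=
  forall e f, E e -> E f -> e = mul e f -> f = mul f e -> e = f.

Definition max_right_pre_reduced (Id : S -> Prop) (E : S -> Prop) : Prop :=
  right_pre_reduced E /\
  (forall e, E e -> Id e) /\
  (forall f, Id f -> exists e, E e /\ sim_r e f /\
                     forall e', E e' -> sim_r e' f -> e' = e).

Variable one : S.

(* Data witnessing that S is an inductive left E-monoid, with meet
   operation [meet] on E and operation [dot] (t . e). *)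
Definition inductive_data (E : S -> Prop) (meet dot : S -> S -> S) : Prop :=
  E one /\
  (forall e, E e -> idempotent e) /\
  right_pre_reduced E /\
  (forall e f, E e -> E f ->
     E (meet e f) /\ le_r (meet e f) e /\ le_r (meet e f) f /\
     (forall g, E g -> le_r g e -> le_r g f -> le_r g (meet e f))) /\
  (forall t e, E e ->
     E (dot t e) /\
     (forall s, mul (mul s t) e = mul s t <-> mul s (dot t e) = s)) /\
  (forall s e f, E e -> E f -> mul s e = s -> mul s f = s ->
     mul s (meet e f) = s).

Definition inductive_left_E_monoid (E : S -> Prop) : Prop :=
  exists meet dot, inductive_data E meet dot.

Variable zero : S.

Definition integral : Prop :=
  forall s t, mul s t = zero -> s = zero \/ t = zero.

Definition Rest0 (E : S -> Prop) (p : S * S) : Prop :=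
  E (fst p) /\ mul (fst p) (snd p) = snd p /\ (snd p = zero -> fst p = zero).

Definition Rest0_mul (meet dot : S -> S -> S) (p q : S * S) : S * S :=
  let g := meet (fst p) (dot (snd p) (fst q)) in
  (g, mul g (mul (snd p) (snd q))).

Definition Rest0_D (p : S * S) : S * S := (fst p, fst p).

End Generic.

Definition unary_iso_onto {A B : Type} (mulA : A -> A -> A) (DA : A -> A)
  (R : B -> Prop) (mulB : B -> B -> B) (DB : B -> B) : Prop :=
  exists phi : A -> B,
    (forall a a', phi a = phi a' -> a = a') /\
    (forall b, R b <-> exists a, phi a = b) /\
    (forall a a', phi (mulA a a') = mulB (phi a) (phi a')) /\
    (forall a, phi (DA a) = DB (phi a)).

(* Main.v *)
Require Import Defs.
From Stdlib Require Import Classical FunctionalExtensionality PropExtensionality ProofIrrelevance ClassicalEpsilon.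

Lemma rel_ext {X : Type} (r t : Rel X) : (forall x y, r x y <-> t x y) -> r = t.
Proof.
  intros H. apply functional_extensionality; intro x.
  apply functional_extensionality; intro y. apply propositional_extensionality. apply H.
Qed.

Lemma some_eq {X : Type} (a b : TRel X) : proj1_sig a = proj1_sig b -> Some a = Some b.
Proof.
  destruct a as [a pa], b as [b pb]; simpl; intros ->. f_equal. f_equal. apply proof_irrelevance.
Qed.

Lemma some_inj {X : Type} (a b : TRel X) : Some a = Some b -> proj1_sig a = proj1_sig b.
Proof. intros H; injection H; intros ->; reflexivity. Qed.

Lemma mul_assoc {X : Type} (a b c : TRel0 X) :
  TRel0_mul a (TRel0_mul b c) = TRel0_mul (TRel0_mul a b) c.
Proof.
  destruct a as [a|], b as [b|], c as [c|]; try reflexivity.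
  change (Some (TRel_mul a (TRel_mul b c)) = Some (TRel_mul (TRel_mul a b) c)).
  apply some_eq; simpl. apply rel_ext; intros x y; unfold rcomp; firstorder.
Qed.

Definition GoodRel {X : Type} (r : Rel X) : Prop :=
  (forall x y y', r x y -> r x y' -> y = y') /\ (forall x y, r x y -> r y y).
Definition GoodE {X : Type} (e : TRel0 X) : Prop :=
  match e with None => True | Some r => GoodRel (proj1_sig r) end.
Definition Fx {X : Type} (e : TRel0 X) (y : X) : Prop :=
  match e with None => False | Some r => proj1_sig r y y end.

Lemma Id_good {X : Type} (e : TRel0 X) :
  idempotents_in (@TRel0_mul X) (@in_T0 X) e -> GoodE e.
Proof.
  destruct e as [r|]; [|simpl; auto].
  intros [[f Hf] Hid]. unfold idempotent in Hid.
  change (Some (TRel_mul r r) = Some r) in Hid.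
  apply some_inj in Hid. simpl in Hid. rewrite Hf in Hid.
  assert (Hff: forall x, f (f x) = f x).
  { intro x. assert (H: rcomp (graph f) (graph f) x (f (f x))) by (exists (f x); split; reflexivity).
    rewrite Hid in H. unfold graph in H. auto. }
  simpl. rewrite Hf. unfold GoodRel, graph. split.
  - intros x y y' <- <-; reflexivity.
  - intros x y <-. apply Hff.
Qed.

Lemma Fx_some {X : Type} (HX : inhabited X) (r : TRel X) :
  GoodRel (proj1_sig r) -> exists y, proj1_sig r y y.
Proof.
  intros [_ Hfix]. destruct HX as [x]. destruct (proj2_sig r x) as [y Hy]. exists y. eapply Hfix; eauto.
Qed.

Lemma mul_right_some {X : Type} (s r : TRel X) : GoodRel (proj1_sig r) ->
  (TRel0_mul (Some s) (Some r) = Some s <-> forall x y, proj1_sig s x y -> proj1_sig r y y).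
Proof.
  intros [Hfun Hfix].
  change (Some (TRel_mul s r) = Some s <-> forall x y, proj1_sig s x y -> proj1_sig r y y).
  split.
  - intros H x y Hs. apply some_inj in H. simpl in H.
    assert (Hc: rcomp (proj1_sig s) (proj1_sig r) x y) by (rewrite H; exact Hs).
    destruct Hc as [z [_ Hz]]. eapply Hfix; eauto.
  - intros H. apply some_eq. simpl. apply rel_ext. intros x y. split.
    + intros [z [Hz1 Hz2]].
      assert (z = y) by (eapply Hfun; [apply (H _ _ Hz1)| exact Hz2]). subst; auto.
    + intros Hs. exists y. split; eauto.
Qed.

Lemma mulS_right {X : Type} (HX : inhabited X) (s : TRel X) (e : TRel0 X) : GoodE e ->
  (TRel0_mul (Some s) e = Some s <-> forall x y, proj1_sig s x y -> Fx e y).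
Proof.
  destruct e as [r|]; intros G.
  - rewrite (mul_right_some s r G). simpl. tauto.
  - simpl. split; [discriminate|]. intros H. destruct HX as [x].
    destruct (proj2_sig s x) as [y Hy]. destruct (H _ _ Hy).
Qed.

Lemma le_Fx {X : Type} (HX : inhabited X) (m e : TRel0 X) : GoodE m -> GoodE e ->
  (le_r (@TRel0_mul X) m e <-> forall y, Fx m y -> Fx e y).
Proof.
  unfold le_r. destruct m as [m|]; intros Gm Ge.
  - split.
    + intros H y Hy. symmetry in H. apply (proj1 (mulS_right HX m e Ge) H y y Hy).
    + intros H. symmetry. apply (mulS_right HX m e Ge). intros x y Hxy. apply H.
      simpl. eapply (proj2 Gm); eauto.
  - simpl. split; intros; [contradiction| reflexivity].
Qed.

Definition MaxE {X : Type} (E : TRel0 X -> Prop) : Prop :=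
  max_right_pre_reduced (@TRel0_mul X) (idempotents_in (@TRel0_mul X) (@in_T0 X)) E.

Lemma E_good {X : Type} (E : TRel0 X -> Prop) (e : TRel0 X) : MaxE E -> E e -> GoodE e.
Proof. intros [_ [Hs _]] He. apply Id_good, Hs, He. Qed.

Lemma E_None {X : Type} (E : TRel0 X -> Prop) : MaxE E -> E None.
Proof.
  intros [_ [_ Hc]].
  assert (HI: idempotents_in (@TRel0_mul X) (@in_T0 X) None) by (split; simpl; auto; reflexivity).
  destruct (Hc None HI) as [e [He [[H1 _] _]]].
  unfold le_r in H1. destruct e; simpl in H1; [discriminate| exact He].
Qed.

Definition isEs {X : Type} (E : TRel0 X -> Prop) (A : X -> Prop) (e : TRel0 X) : Prop :=
  E e /\ forall y, Fx e y <-> A y.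

Lemma isEs_ex {X : Type} (HX : inhabited X) (E : TRel0 X -> Prop) (A : X -> Prop) :
  MaxE E -> exists e, isEs E A e.
Proof.
  intros Hmax.
  destruct (classic (exists a, A a)) as [[a Ha]|Hn].
  2:{ exists None. split; [apply E_None; auto|]. simpl. intros y; split; [contradiction|].
      intros Hy; apply Hn; eauto. }
  set (f := fun x => if excluded_middle_informative (A x) then x else a).
  assert (Hf1 : forall y, f y = y <-> A y).
  { intro y; unfold f; destruct (excluded_middle_informative (A y)); split; intros; subst; auto; tauto. }
  assert (Hf2 : forall y, A (f y)).
  { intro y; unfold f; destruct (excluded_middle_informative (A y)); auto. }
  assert (Hlt : left_total (graph f)) by (intro x; exists (f x); reflexivity).
  set (g := Some (exist _ (graph f) Hlt) : TRel0 X).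
  assert (Hg: idempotents_in (@TRel0_mul X) (@in_T0 X) g).
  { split. exists f; reflexivity. unfold idempotent. unfold g.
    change (Some (TRel_mul (exist _ (graph f) Hlt) (exist _ (graph f) Hlt)) = Some (exist _ (graph f) Hlt)).
    apply some_eq. simpl. apply rel_ext. intros x y. unfold rcomp, graph. split.
    - intros [z [<- <-]]. symmetry. apply Hf1, Hf2.
    - intros <-. exists (f x). split; auto. apply Hf1, Hf2. }
  destruct Hmax as [Hpre [Hsub Hcl]].
  destruct (Hcl g Hg) as [e [He [[H1 H2] _]]].
  exists e. split; auto.
  assert (Ge := Id_good _ (Hsub e He)). assert (Gg := Id_good _ Hg).
  rewrite (le_Fx HX _ _ Ge Gg) in H1. rewrite (le_Fx HX _ _ Gg Ge) in H2.
  assert (Hfg : forall y, Fx g y <-> A y) by (intro y; simpl; unfold graph; apply Hf1).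
  intro y. rewrite <- Hfg. split; auto.
Qed.

Lemma isEs_uniq {X : Type} (HX : inhabited X) (E : TRel0 X -> Prop) (A A' : X -> Prop) (e e' : TRel0 X) :
  MaxE E -> isEs E A e -> isEs E A' e' -> (forall y, A y <-> A' y) -> e = e'.
Proof.
  intros Hmax [He Ha] [He' Ha'] HAA.
  assert (Ge := E_good E e Hmax He). assert (Ge' := E_good E e' Hmax He').
  destruct Hmax as [Hpre _]. apply Hpre; auto.
  - apply (le_Fx HX _ _ Ge Ge'). intros y; rewrite Ha, Ha', HAA; auto.
  - apply (le_Fx HX _ _ Ge' Ge). intros y; rewrite Ha, Ha', HAA; auto.
Qed.

Definition ch {X : Type} (E : TRel0 X -> Prop) (A : X -> Prop) : TRel0 X :=
  epsilon (inhabits (@None (TRel X))) (fun e => isEs E A e).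

Lemma ch_spec {X : Type} (HX : inhabited X) (E : TRel0 X -> Prop) (A : X -> Prop) :
  MaxE E -> isEs E A (ch E A).
Proof. intros Hmax. unfold ch. apply epsilon_spec. apply isEs_ex; auto. Qed.

Lemma ch_eq {X : Type} (HX : inhabited X) (E : TRel0 X -> Prop) (A : X -> Prop) e :
  MaxE E -> isEs E A e -> ch E A = e.
Proof. intros Hmax H. eapply isEs_uniq; eauto. apply ch_spec; auto. reflexivity. Qed.

Definition meet0 {X : Type} (E : TRel0 X -> Prop) (e f : TRel0 X) : TRel0 X :=
  ch E (fun y => Fx e y /\ Fx f y).
Definition Cdot {X : Type} (t e : TRel0 X) (y : X) : Prop :=
  match t with None => True | Some tau => forall z, proj1_sig tau y z -> Fx e z end.
Definition dot0 {X : Type} (E : TRel0 X -> Prop) (t e : TRel0 X) : TRel0 X :=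
  ch E (Cdot t e).

Lemma meet0_props {X : Type} (HX : inhabited X) (E : TRel0 X -> Prop) : MaxE E ->
  forall e f, E e -> E f ->
     E (meet0 E e f) /\ le_r (@TRel0_mul X) (meet0 E e f) e /\ le_r (@TRel0_mul X) (meet0 E e f) f /\
     (forall g, E g -> le_r (@TRel0_mul X) g e -> le_r (@TRel0_mul X) g f -> le_r (@TRel0_mul X) g (meet0 E e f)).
Proof.
  intros Hmax e f He Hf.
  destruct (ch_spec HX E (fun y => Fx e y /\ Fx f y) Hmax) as [Hm HF].
  fold (meet0 E e f) in Hm, HF.
  assert (Ge := E_good E e Hmax He). assert (Gf := E_good E f Hmax Hf).
  assert (Gm := E_good E _ Hmax Hm).
  split; [exact Hm|]. split; [|split].
  - apply (le_Fx HX _ _ Gm Ge). intros y Hy. apply HF in Hy. tauto.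
  - apply (le_Fx HX _ _ Gm Gf). intros y Hy. apply HF in Hy. tauto.
  - intros g Hg H1 H2. assert (Gg := E_good E g Hmax Hg).
    rewrite (le_Fx HX _ _ Gg Ge) in H1. rewrite (le_Fx HX _ _ Gg Gf) in H2.
    apply (le_Fx HX _ _ Gg Gm). intros y Hy. apply HF. auto.
Qed.

Lemma dot0_props {X : Type} (HX : inhabited X) (E : TRel0 X -> Prop) : MaxE E ->
  forall t e, E e ->
     E (dot0 E t e) /\
     (forall s, TRel0_mul (TRel0_mul s t) e = TRel0_mul s t <-> TRel0_mul s (dot0 E t e) = s).
Proof.
  intros Hmax t e He.
  destruct (ch_spec HX E (Cdot t e) Hmax) as [Hd HF].
  fold (dot0 E t e) in Hd, HF.
  assert (Ge := E_good E e Hmax He). assert (Gd := E_good E _ Hmax Hd).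
  split; [exact Hd|]. intros [s|].
  2:{ simpl. split; reflexivity. }
  rewrite (mulS_right HX s _ Gd).
  destruct t as [tau|].
  - change (TRel0_mul (Some (TRel_mul s tau)) e = Some (TRel_mul s tau) <->
            (forall x y, proj1_sig s x y -> Fx (dot0 E (Some tau) e) y)).
    rewrite (mulS_right HX _ _ Ge). simpl.
    split.
    + intros H x y Hxy. apply HF. simpl. intros z Hz. apply (H x z). exists y; auto.
    + intros H x y [z [Hz1 Hz2]]. pose proof (H _ _ Hz1) as Hz.
      apply HF in Hz. simpl in Hz. eauto.
  - simpl. split; [|reflexivity]. intros _ x y _. apply HF. simpl. auto.
Qed.

Lemma E_one {X : Type} (HX : inhabited X) (E : TRel0 X -> Prop) : MaxE E -> E TRel0_one.
Proof.
  intros Hmax.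
  destruct (ch_spec HX E (fun _ => True) Hmax) as [He HF].
  assert (Ge := E_good E _ Hmax He).
  destruct (ch E (fun _ => True)) as [r|] eqn:Hr.
  2:{ destruct HX as [x]. exfalso. apply (proj2 (HF x)). exact I. }
  replace (@TRel0_one X) with (Some r); [exact He|].
  apply some_eq. simpl. destruct Ge as [Hfun Hfix]. apply rel_ext. intros x y. split.
  - intros Hxy. eapply Hfun; [|exact Hxy]. apply (proj2 (HF x) I).
  - intros <-. apply (proj2 (HF x) I).
Qed.

Lemma data0 {X : Type} (HX : inhabited X) (E : TRel0 X -> Prop) : MaxE E ->
  inductive_data (@TRel0_mul X) TRel0_one E (meet0 E) (dot0 E).
Proof.
  intros Hmax. split; [apply E_one; auto|]. split.
  { intros e He. destruct Hmax as [_ [Hs _]]. apply (Hs e He). }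
  split; [apply Hmax|]. split; [apply meet0_props; auto|]. split; [apply dot0_props; auto|].
  intros s e f He Hf H1 H2.
  destruct s as [s|]; [|reflexivity].
  assert (Ge := E_good E e Hmax He). assert (Gf := E_good E f Hmax Hf).
  destruct (ch_spec HX E (fun y => Fx e y /\ Fx f y) Hmax) as [Hm HF].
  fold (meet0 E e f) in Hm, HF.
  assert (Gm := E_good E _ Hmax Hm).
  rewrite (mulS_right HX s _ Ge) in H1. rewrite (mulS_right HX s _ Gf) in H2.
  apply (mulS_right HX s _ Gm). intros x y Hxy. apply HF. eauto.
Qed.

Lemma meet_eq {X : Type} (HX : inhabited X) (E : TRel0 X -> Prop) meet dot : MaxE E ->
  inductive_data (@TRel0_mul X) TRel0_one E meet dot ->
  forall e f, E e -> E f -> meet e f = meet0 E e f.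
Proof.
  intros Hmax [_ [_ [Hpre [Hmeet _]]]] e f He Hf.
  destruct (Hmeet e f He Hf) as [Hm [H1 [H2 H3]]].
  destruct (meet0_props HX E Hmax e f He Hf) as [Hm0 [G1 [G2 G3]]].
  apply Hpre; auto. apply G3; auto. apply H3; auto.
Qed.

Lemma dot_eq {X : Type} (HX : inhabited X) (E : TRel0 X -> Prop) meet dot : MaxE E ->
  inductive_data (@TRel0_mul X) TRel0_one E meet dot ->
  forall t e, E e -> dot t e = dot0 E t e.
Proof.
  intros Hmax [_ [Hidem [Hpre [_ [Hdot _]]]]] t e He.
  destruct (Hdot t e He) as [Hd H1].
  destruct (dot0_props HX E Hmax t e He) as [Hd0 G1].
  apply Hpre; auto.
  - symmetry. apply G1. apply H1. apply Hidem; auto.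
  - symmetry. apply H1. apply G1. apply Hidem; auto.
Qed.

Definition tot {X : Type} (rho : Rel X) : Rel X := fun x y => rho x y \/ ~ rdom rho x.
Lemma tot_lt {X : Type} (rho : Rel X) : left_total (tot rho).
Proof.
  intros x. destruct (classic (rdom rho x)) as [[y Hy]|Hn].
  - exists y; left; auto.
  - exists x; right; auto.
Qed.
Definition totT {X : Type} (rho : Rel X) : TRel X := exist _ (tot rho) (tot_lt rho).

Definition phi {X : Type} (E : TRel0 X -> Prop) (rho : Rel X) : TRel0 X * TRel0 X :=
  (ch E (rdom rho), TRel0_mul (ch E (rdom rho)) (Some (totT rho))).

Lemma sec_char {X : Type} (r rho : Rel X) : GoodRel r -> (forall y, r y y <-> rdom rho y) ->
  forall x y, rcomp r (tot rho) x y <-> exists z, r x z /\ rho z y.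
Proof.
  intros [Hfun Hfix] HD x y. split.
  - intros [z [Hz [H|H]]].
    + exists z; auto.
    + exfalso. apply H, HD. eapply Hfix; eauto.
  - intros [z [Hz H]]. exists z; split; auto. left; auto.
Qed.

Lemma phi_inj {X : Type} (HX : inhabited X) (E : TRel0 X -> Prop) : MaxE E ->
  forall a a', phi E a = phi E a' -> a = a'.
Proof.
  intros Hmax a a' H. unfold phi in H. injection H; intros H2 H1.
  destruct (ch_spec HX E (rdom a) Hmax) as [He HF].
  destruct (ch_spec HX E (rdom a') Hmax) as [_ HF'].
  rewrite <- H1 in H2, HF'.
  assert (Ge := E_good E _ Hmax He).
  destruct (ch E (rdom a)) as [r|].
  2:{ apply rel_ext; intros x y; split; intros Hxy; exfalso.
      - exact (proj2 (HF x) (ex_intro _ y Hxy)).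
      - exact (proj2 (HF' x) (ex_intro _ y Hxy)). }
  change (Some (TRel_mul r (totT a)) = Some (TRel_mul r (totT a'))) in H2.
  apply some_inj in H2. simpl in H2.
  simpl in HF, HF'.
  assert (Hc := sec_char _ _ Ge HF). assert (Hc' := sec_char _ _ Ge HF').
  destruct Ge as [Hfun Hfix].
  apply rel_ext; intros x y; split; intros Hxy.
  - assert (Hx : proj1_sig r x x) by (apply HF; exists y; exact Hxy).
    assert (Hcc : rcomp (proj1_sig r) (tot a') x y) by (rewrite <- H2; apply Hc; exists x; auto).
    apply Hc' in Hcc. destruct Hcc as [z [Hz1 Hz2]].
    assert (z = x) by (eapply Hfun; eauto). subst; auto.
  - assert (Hx : proj1_sig r x x) by (apply HF'; exists y; exact Hxy).
    assert (Hcc : rcomp (proj1_sig r) (tot a) x y) by (rewrite H2; apply Hc'; exists x; auto).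
    apply Hc in Hcc. destruct Hcc as [z [Hz1 Hz2]].
    assert (z = x) by (eapply Hfun; eauto). subst; auto.
Qed.

Lemma phi_range {X : Type} (HX : inhabited X) (E : TRel0 X -> Prop) : MaxE E ->
  forall b, Rest0 (@TRel0_mul X) TRel0_zero E b <-> exists a, phi E a = b.
Proof.
  intros Hmax [e s]. unfold Rest0; simpl. split.
  - intros [He [Hes Hz]].
    destruct e as [r|].
    + destruct s as [sg|].
      2:{ specialize (Hz eq_refl). discriminate. }
      assert (Ge := E_good E _ Hmax He).
      change (Some (TRel_mul r sg) = Some sg) in Hes. apply some_inj in Hes. simpl in Hes.
      exists (fun x y => proj1_sig r x x /\ proj1_sig sg x y).
      assert (Hd : forall y, Fx (Some r) y <-> rdom (fun x y => proj1_sig r x x /\ proj1_sig sg x y) y).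
      { intros y; simpl; split.
        - intros Hy. destruct (proj2_sig sg y) as [w Hw]. exists w; auto.
        - intros [w [Hw _]]; auto. }
      assert (Hch := ch_eq HX E _ (Some r) Hmax (conj He Hd)).
      unfold phi. rewrite Hch. f_equal.
      change (Some (TRel_mul r (totT (fun x y => proj1_sig r x x /\ proj1_sig sg x y))) = Some sg).
      apply some_eq. simpl. apply rel_ext. intros x y.
      rewrite (sec_char _ _ Ge Hd). destruct Ge as [Hfun Hfix].
      assert (Hsg : forall x y, proj1_sig sg x y <-> rcomp (proj1_sig r) (proj1_sig sg) x y)
        by (intros; rewrite Hes; tauto).
      rewrite Hsg. split.
      * intros [z [Hz1 [_ H]]]. exists z; auto.
      * intros [z [Hz1 H]]. exists z; split; auto. split; auto. eapply Hfix; eauto.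
    + simpl in Hes. subst s.
      exists (fun _ _ => False). unfold phi.
      rewrite (ch_eq HX E _ None Hmax).
      * reflexivity.
      * split; [apply E_None; auto|]. simpl. intros y; split; [contradiction|]. intros [w []].
  - intros [a Ha]. unfold phi in Ha. injection Ha; intros <- <-.
    destruct (ch_spec HX E (rdom a) Hmax) as [He _].
    split; [auto|]. split.
    + rewrite mul_assoc. destruct Hmax as [_ [Hs _]]. rewrite (proj2 (Hs _ He)). reflexivity.
    + destruct (ch E (rdom a)); [discriminate|auto].
Qed.

Lemma dom_lemma {X : Type} (rho tau : Rel X) (eR eT : TRel0 X) :
  GoodE eR -> (forall y, Fx eR y <-> rdom rho y) -> (forall y, Fx eT y <-> rdom tau y) ->
  forall y, (Fx eR y /\ Cdot (TRel0_mul eR (Some (totT rho))) eT y) <-> rdom (demonic rho tau) y.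
Proof.
  intros G HR HT y. destruct eR as [rr|].
  2:{ simpl. split; [tauto|]. intros [v [[w [Hw _]] _]]. exfalso. exact (proj2 (HR y) (ex_intro _ w Hw)). }
  change (proj1_sig rr y y /\ (forall z, rcomp (proj1_sig rr) (tot rho) y z -> Fx eT z)
          <-> rdom (demonic rho tau) y).
  simpl in G, HR. destruct G as [Hfun Hfix]. split.
  - intros [Hy HC].
    assert (Hall : forall z, rho y z -> rdom tau z).
    { intros z Hz. apply HT, HC. exists y; split; auto. left; auto. }
    destruct (proj1 (HR y) Hy) as [w Hw].
    destruct (Hall w Hw) as [v Hv].
    exists v. split; [exists w; auto| exact Hall].
  - intros [v [[w [Hw Hv]] Hall]].
    assert (Hy : proj1_sig rr y y) by (apply HR; exists w; auto).
    split; auto. intros z [u [Hu Htot]].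
    assert (u = y) by (eapply Hfun; eauto). subst u.
    apply HT. destruct Htot as [Htot|Htot]; [auto|].
    exfalso. apply Htot. exists w; auto.
Qed.

Lemma phi_hom {X : Type} (HX : inhabited X) (E : TRel0 X -> Prop) meet dot : MaxE E ->
  inductive_data (@TRel0_mul X) TRel0_one E meet dot ->
  forall rho tau, phi E (demonic rho tau) = Rest0_mul (@TRel0_mul X) meet dot (phi E rho) (phi E tau).
Proof.
  intros Hmax Hdata rho tau.
  unfold Rest0_mul, phi. cbn [fst snd].
  destruct (ch_spec HX E (rdom rho) Hmax) as [HeR HR].
  destruct (ch_spec HX E (rdom tau) Hmax) as [HeT HT].
  remember (ch E (rdom rho)) as eR eqn:HeqR. remember (ch E (rdom tau)) as eT eqn:HeqT.
  clear HeqR HeqT.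
  assert (GR := E_good E _ Hmax HeR). assert (GT := E_good E _ Hmax HeT).
  rewrite (dot_eq HX E meet dot Hmax Hdata _ _ HeT).
  destruct (dot0_props HX E Hmax (TRel0_mul eR (Some (totT rho))) eT HeT) as [Hd _].
  rewrite (meet_eq HX E meet dot Hmax Hdata _ _ HeR Hd).
  destruct (meet0_props HX E Hmax _ _ HeR Hd) as [Hm _].
  assert (HFg : forall y, Fx (meet0 E eR (dot0 E (TRel0_mul eR (Some (totT rho))) eT)) y
                         <-> rdom (demonic rho tau) y).
  { intros y. destruct (ch_spec HX E (fun y => Fx eR y /\ Fx (dot0 E (TRel0_mul eR (Some (totT rho))) eT) y) Hmax) as [_ H1].
    fold (meet0 E eR (dot0 E (TRel0_mul eR (Some (totT rho))) eT)) in H1.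
    rewrite H1. rewrite <- (dom_lemma rho tau eR eT GR HR HT y).
    destruct (ch_spec HX E (Cdot (TRel0_mul eR (Some (totT rho))) eT) Hmax) as [_ H2].
    fold (dot0 E (TRel0_mul eR (Some (totT rho))) eT) in H2. rewrite H2. tauto. }
  rewrite (ch_eq HX E _ _ Hmax (conj Hm HFg)).
  f_equal.
  remember (meet0 E eR (dot0 E (TRel0_mul eR (Some (totT rho))) eT)) as g eqn:Hg. clear Hg.
  assert (Gg := E_good E _ Hmax Hm).
  destruct g as [rg|]; [|reflexivity].
  destruct (Fx_some HX rg Gg) as [y0 Hy0].
  assert (Hd0 := proj1 (HFg y0) Hy0). destruct Hd0 as [v0 [[w0 [Hw0 Hv0]] Hall0]].
  destruct eR as [rr|]; [| exfalso; apply (proj2 (HR y0)); exists w0; auto].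
  destruct eT as [rt|]; [| exfalso; apply (proj2 (HT w0)); exists v0; auto].
  symmetry.
  change (Some (TRel_mul rg (TRel_mul (TRel_mul rr (totT rho)) (TRel_mul rt (totT tau))))
          = Some (TRel_mul rg (totT (demonic rho tau)))).
  apply some_eq. simpl. simpl in GR, GT, Gg, HR, HT, HFg.
  destruct GR as [Rfun Rfix]. destruct GT as [Tfun Tfix]. destruct Gg as [Gfun Gfix].
  apply rel_ext. intros x y. split.
  - intros [a [Ha [b [[c [Hc Hcb]] [d [Hd' Hdy]]]]]].
    assert (Haa : proj1_sig rg a a) by (eapply Gfix; eauto).
    destruct (proj1 (HFg a) Haa) as [v [[w [Hw Hv]] Hall]].
    assert (HRa : proj1_sig rr a a) by (apply HR; exists w; auto).
    assert (c = a) by (eapply Rfun; eauto). subst c.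
    destruct Hcb as [Hab|Hn]; [| exfalso; apply Hn; exists w; auto].
    assert (HTb : proj1_sig rt b b) by (apply HT; apply Hall; auto).
    assert (d = b) by (eapply Tfun; eauto). subst d.
    destruct Hdy as [Hby|Hn]; [| exfalso; apply Hn; apply HT; auto].
    exists a. split; auto. left. split; [exists b; auto| exact Hall].
  - intros [a [Ha Htot]].
    assert (Haa : proj1_sig rg a a) by (eapply Gfix; eauto).
    assert (Hda := proj1 (HFg a) Haa).
    destruct Htot as [Hdem|Hn]; [| exfalso; auto].
    destruct Hdem as [[b [Hab Hby]] Hall].
    assert (HRa : proj1_sig rr a a) by (apply HR; exists b; auto).
    assert (HTb : proj1_sig rt b b) by (apply HT; apply Hall; auto).
    exists a. split; auto. exists b. split.
    + exists a. split; auto. left; auto.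
    + exists b. split; auto. left; auto.
Qed.

Lemma phi_D {X : Type} (HX : inhabited X) (E : TRel0 X -> Prop) : MaxE E ->
  forall rho, phi E (Drel rho) = Rest0_D (phi E rho).
Proof.
  intros Hmax rho. unfold phi, Rest0_D. cbn [fst snd].
  destruct (ch_spec HX E (rdom rho) Hmax) as [He HR].
  assert (Hdd : forall y, Fx (ch E (rdom rho)) y <-> rdom (Drel rho) y).
  { intros y. rewrite HR. unfold Drel, rdom. split.
    - intros H. exists y. split; auto.
    - intros [w [_ H]]. exact H. }
  rewrite (ch_eq HX E _ _ Hmax (conj He Hdd)). f_equal.
  assert (G := E_good E _ Hmax He).
  remember (ch E (rdom rho)) as e eqn:Heq. clear Heq.
  destruct e as [r|]; [|reflexivity].
  change (Some (TRel_mul r (totT (Drel rho))) = Some r).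
  apply some_eq. simpl. simpl in G, HR, Hdd. destruct G as [Rfun Rfix].
  apply rel_ext; intros x y; split.
  - intros [z [Hz [[<- _]|Hn]]]; auto.
    exfalso. apply Hn. apply Hdd. eapply Rfix; eauto.
  - intros Hxy. exists y. split; auto. left. split; auto. apply HR. eapply Rfix; eauto.
Qed.

Theorem theorem7p6 (X : Type) (HX : inhabited X) (E : TRel0 X -> Prop) :
  max_right_pre_reduced (@TRel0_mul X)
    (idempotents_in (@TRel0_mul X) (@in_T0 X)) E ->
  inductive_left_E_monoid (@TRel0_mul X) TRel0_one E /\
  integral (@TRel0_mul X) TRel0_zero /\
  E TRel0_zero /\
  (forall meet dot : TRel0 X -> TRel0 X -> TRel0 X,
     inductive_data (@TRel0_mul X) TRel0_one E meet dot ->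
     unary_iso_onto (@demonic X) (@Drel X)
       (Rest0 (@TRel0_mul X) TRel0_zero E)
       (Rest0_mul (@TRel0_mul X) meet dot)
       (@Rest0_D (TRel0 X))).
Proof.
  intros Hmax. fold (MaxE E) in Hmax.
  split; [exists (meet0 E), (dot0 E); apply data0; auto|].
  split.
  { unfold integral, TRel0_zero. intros [s|] [t|] H; simpl in H; auto; discriminate. }
  split; [unfold TRel0_zero; apply E_None; auto|].
  intros meet dot Hdata. exists (phi E). split; [apply phi_inj; auto|].
  split; [apply phi_range; auto|]. split.
  - apply phi_hom; auto.
  - apply phi_D; auto.
Qed.
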